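(* Let $n\ge2$, let $\mathbb{A}=(A_{ij})_{i,j=1}^n$ be an operator matrix as in the context, and assume that for all $i\ne j$ there are constants $c_{ij},d_{ij}\ge0$ such that $\|A_{ij}x_j\|_{X_i}\le c_{ij}\|A_{jj}x_j\|_{X_j}+d_{ij}\|x_j\|_{X_j}$ for all $x_j\in\mathcal{D}(A_{jj})$, and moreover $\sum_{i=1,i\ne j}^nc_{ij}<1$ for every $j$. Let $\pi$ be a permutation of $\{1,\ldots,n\}$. Then $\mathbb{A}(\pi)_k$ is closed on its domain for all $k\in\{1,\ldots,n\}$.
   Context: Let $X_1,\ldots,X_n$ be complex Banach spaces and $X=X_1\times\cdots\times X_n$ with norm $\|x\|=\sum_i\|x_i\|_{X_i}$. For $i,j$, $A_{ij}:\mathcal{D}(A_{ij})\subset X_j\to X_i$ are linear, $A_{ii}$ closed, and for $i\ne j$ $\mathcal{D}(A_{jj})\subset\mathcal{D}(A_{ij})$. $\mathbb{A}=(A_{ij})$ acts on $\mathcal{D}(A_{11})\times\cdots\times\mathcal{D}(A_{nn})$ by $(\mathbb{A}x)_i=\sum_jA_{ij}x_j$. For a permutation $\pi$, $\mathbb{A}(\pi):=(A_{\pi^{-1}(i),\pi^{-1}(j)})_{i,j=1}^n$ acts on $X_{\pi^{-1}(1)}\times\cdots\times X_{\pi^{-1}(n)}$ with domain $\prod_i\mathcal{D}(A_{\pi^{-1}(i),\pi^{-1}(i)})$, and $\mathbb{A}(\pi)_k$ is its upper-left $k\times k$ block, acting on $X_{\pi^{-1}(1)}\times\cdots\times X_{\pi^{-1}(k)}$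 with domain $\prod_{i=1}^k\mathcal{D}(A_{\pi^{-1}(i),\pi^{-1}(i)})$. *)

(* Defs.v *)
From mathcomp Require Import all_boot all_order all_algebra all_fingroup.
From mathcomp Require Import all_classical all_reals topology normedtype sequences.
From mathcomp.real_closed Require Export complex.
Export numFieldNormedType.Exports.
Import GRing.Theory Num.Theory.
Local Open Scope ring_scope.
Local Open Scope classical_set_scope.

Set Implicit Arguments.
Unset Strict Implicit.
Unset Printing Implicit Defensive.

Definition is_subspace (K : numFieldType) (V : lmodType K) (D : set V) : Prop :=
  [/\ D 0, (forall x y, D x -> D y -> D (x + y)) & (forall (a : K) x, D x -> D (a *: x))].

Definition linear_on (K : numFieldType) (U V : lmodType K) (D : set U) (f : U -> V) : Prop :=
  forall (a : K) x y, D x -> D y -> f (a *: x + y) = a *: f x + f y.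

Definition closed_op (K : numFieldType) (U V : normedModType K)
  (D : set U) (f : U -> V) : Prop :=
  forall (u : nat -> U) (x : U) (y : V),
    (forall m, D (u m)) -> u @ \oo --> x -> (f \o u) @ \oo --> y ->
    D x /\ f x = y.

(* The operator matrix (A_{s i, s j})_{i,j < k} built from the rows/columns
   selected by s : 'I_k -> 'I_n, acting on X_(s 0) x ... x X_(s (k-1)). *)
Definition block_apply (K : numFieldType) (n k : nat) (X : 'I_n -> normedModType K)
  (A : forall i j : 'I_n, X j -> X i) (s : 'I_k -> 'I_n)
  (x : forall i : 'I_k, X (s i)) (i : 'I_k) : X (s i) :=
  \sum_(j < k) A (s i) (s j) (x j).

Definition block_dom (K : numFieldType) (n k : nat) (X : 'I_n -> normedModType K)
  (D : forall i j : 'I_n, set (X j)) (s : 'I_k -> 'I_n)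
  (x : forall i : 'I_k, X (s i)) : Prop :=
  forall i : 'I_k, D (s i) (s i) (x i).

(* Closedness of the block operator on the product space with the sum norm;
   convergence in the sum norm is written componentwise. *)
Definition block_closed (K : numFieldType) (n k : nat) (X : 'I_n -> normedModType K)
  (A : forall i j : 'I_n, X j -> X i) (D : forall i j : 'I_n, set (X j))
  (s : 'I_k -> 'I_n) : Prop :=
  forall (u : nat -> forall i : 'I_k, X (s i))
         (x y : forall i : 'I_k, X (s i)),
    (forall m, block_dom D (u m)) ->
    (forall i, (fun m => u m i) @ \oo --> x i) ->
    (forall i, (fun m => block_apply A (u m) i) @ \oo --> y i) ->
    block_dom D x /\ (forall i, block_apply A x i = y i).

(* Index map for A(pi)_k : position i (0-based, i < k) carries index pi^{-1}(i). *)
Definition perm_sel (n k : nat) (pi : 'S_n) (hk : (k <= n)%N) (i : 'I_k) : 'I_n :=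
  (pi^-1)%g (widen_ord hk i).

(* Main.v *)
Require Import Defs.
From mathcomp Require Import all_boot all_order all_algebra all_fingroup.
From mathcomp Require Import all_classical all_reals topology normedtype sequences.
Import numFieldNormedType.Exports Order.POrderTheory GRing.Theory Num.Theory.
Local Open Scope ring_scope.
Local Open Scope classical_set_scope.

Lemma dom0 (K : numFieldType) T (F : set_system T) {FF : Filter F} (g h : T -> K) :
  (forall t, 0 <= h t <= g t) -> g @ F --> (0:K) -> h @ F --> (0:K).
Proof.
move=> H /cvgrPdist_lt Hg; apply/cvgrPdist_lt => e e0.
apply: filterS (Hg e e0) => t; rewrite !sub0r !normrN.
have /andP[h0 hg] := H t.
rewrite (ger0_norm h0) (ger0_norm (le_trans h0 hg)); exact: le_lt_trans.
Qed.

Lemma cauchy_of_diff (K : numFieldType) (V : normedModType K) (f : nat -> V) :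
  (fun p : nat * nat => `|f p.1 - f p.2|) @ (\oo, \oo) --> (0:K) -> cauchy (f @ \oo).
Proof.
move=> /cvgrPdist_lt H; apply/cauchy_ballP => e e0.
have := H e e0; rewrite -ball_normE !near_simpl /=. rewrite -near2_pair.
apply: filterS => -[m l] /=; rewrite sub0r normrN normr_id /=; exact.
Qed.

Lemma diff_of_cvg (K : numFieldType) (V : normedModType K) (f : nat -> V) :
  cvg (f @ \oo) -> (fun p : nat * nat => `|f p.1 - f p.2|) @ (\oo, \oo) --> (0:K).
Proof.
move=> /cvg_cauchy /cauchy_ballP H; apply/cvgrPdist_lt => e e0.
have := H e e0; rewrite -ball_normE !near_simpl /=.
apply: filterS => -[m l] /=; rewrite sub0r normrN normr_id /=; exact.
Qed.

Lemma cvg_of_normdiff (K : numFieldType) (V : normedModType K) T (F : set_system T)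
  {FF : Filter F} (f : T -> V) (a : V) :
  (fun t => `|f t - a|) @ F --> (0:K) -> f @ F --> a.
Proof.
move=> /cvgrPdist_lt H; apply/cvgrPdist_lt => e e0.
by apply: filterS (H e e0) => t; rewrite sub0r normrN normr_id distrC.
Qed.

Lemma normdiff_of_cvg (K : numFieldType) (V : normedModType K) T (F : set_system T)
  {FF : Filter F} (f : T -> V) (a : V) :
  f @ F --> a -> (fun t => `|f t - a|) @ F --> (0:K).
Proof.
move=> /cvgrPdist_lt H; apply/cvgrPdist_lt => e e0.
by apply: filterS (H e e0) => t; rewrite sub0r normrN normr_id distrC.
Qed.

Lemma cvg_sumr (K : numFieldType) (V : normedModType K) T (F : set_system T)
  {FF : Filter F} I (r : seq I) (P : pred I) (f : I -> T -> V) (a : I -> V) :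
  (forall i, P i -> f i @ F --> a i) ->
  (fun t => \sum_(i <- r | P i) f i t) @ F --> \sum_(i <- r | P i) a i.
Proof.
move=> H; elim: r => [|i r IH].
  rewrite big_nil; under eq_fun do rewrite big_nil; exact: cvg_cst.
rewrite big_cons; under eq_fun do rewrite big_cons.
case: ifP => Pi //; exact: cvgD (H i Pi) IH.
Qed.

Lemma cvg_sum0 (K : numFieldType) (V : normedModType K) T (F : set_system T)
  {FF : Filter F} I (r : seq I) (P : pred I) (f : I -> T -> V) :
  (forall i, P i -> f i @ F --> (0:V)) ->
  (fun t => \sum_(i <- r | P i) f i t) @ F --> (0:V).
Proof.
move=> H; have := @cvg_sumr K V T F FF I r P f (fun=> 0) H; rewrite big1 //.
Qed.

Lemma cvg_scal0 (K : numFieldType) T (F : set_system T)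
  {FF : Filter F} (c : K) (g : T -> K) :
  g @ F --> (0:K) -> (fun t => c * g t) @ F --> (0:K).
Proof. by move=> H; rewrite -(mulr0 c); apply: cvgMl_tmp. Qed.

Lemma cvgD0 (K : numFieldType) T (F : set_system T)
  {FF : Filter F} (f g : T -> K) :
  f @ F --> (0:K) -> g @ F --> (0:K) -> (fun t => f t + g t) @ F --> (0:K).
Proof. by move=> Hf Hg; rewrite -(addr0 (0:K)); apply: cvgD. Qed.

Lemma key (K : numFieldType) (k : nat) (a b : 'I_k -> K) (C : 'I_k -> 'I_k -> K) :
 (forall j, 0 <= a j) ->
 (forall i, a i <= b i + \sum_(j | j != i) C i j * a j) ->
 (forall j, \sum_(i | i != j) C i j < 1) ->
 forall j, a j <= (1 - \sum_(i | i != j) C i j)^-1 * \sum_i b i.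
Proof.
move=> a0 Ha Hc j.
pose col := fun j => \sum_(i | i != j) C i j.
have E : \sum_i \sum_(j | j != i) C i j * a j = \sum_j col j * a j.
  under eq_bigr do rewrite big_mkcond.
  rewrite exchange_big; apply: eq_bigr => j' _.
  rewrite /col mulr_suml [RHS]big_mkcond; apply: eq_bigr => i _.
  by rewrite eq_sym.
have S : \sum_j (1 - col j) * a j <= \sum_i b i.
  have : \sum_i a i <= \sum_i b i + \sum_j col j * a j.
    by rewrite -E -big_split; apply: ler_sum => i _; exact: Ha.
  rewrite -lerBlDr -sumrB.
  by under eq_bigr do rewrite -{1}[a _]mul1r -mulrBl.
have T : (1 - col j) * a j <= \sum_j (1 - col j) * a j.
  rewrite (bigD1 j) //= lerDl; apply: sumr_ge0 => i _; apply: mulr_ge0 => //.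
  by rewrite subr_ge0 ltW // (Hc i).
rewrite ler_pdivlMl; last by rewrite subr_gt0 Hc.
exact: le_trans T S.
Qed.

Theorem lemma5p4 (R : realType) (n : nat)
  (X : 'I_n -> completeNormedModType R[i])
  (A : forall i j : 'I_n, X j -> X i) (D : forall i j : 'I_n, set (X j))
  (c d : 'I_n -> 'I_n -> R[i]) :
  (2 <= n)%N ->
  (forall i j, is_subspace (D i j)) ->
  (forall i j, linear_on (D i j) (A i j)) ->
  (forall i, closed_op (D i i) (A i i)) ->
  (forall i j, i != j -> D j j `<=` D i j) ->
  (forall i j, i != j ->
     [/\ 0 <= c i j, 0 <= d i j &
         forall x, D j j x -> `|A i j x| <= c i j * `|A j j x| + d i j * `|x| ]) ->
  (forall j, \sum_(i | i != j) c i j < 1) ->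
  forall (pi : 'S_n) (k : nat) (hk : (k <= n)%N), (1 <= k)%N ->
    block_closed A D (perm_sel pi hk).
Proof.
move=> n2 Hsub Hlin Hcl Hdom Hbnd Hsum pi k hk k1.
set s := perm_sel pi hk.
have s_inj : injective s.
  move=> i j /perm_inj /(congr1 (@nat_of_ord n)) /= ij; exact: val_inj.
have Ds : forall i j : 'I_k, D (s j) (s j) `<=` D (s i) (s j).
  move=> i j; have [->|ij] := eqVneq (s i) (s j); first by [].
  exact: Hdom.
have sub_diff : forall i j (v w : X j), D i j v -> D i j w -> D i j (v - w).
  move=> i j v w Dv Dw; have [_ HD HZ] := Hsub i j.
  by rewrite addrC -scaleN1r; apply: HD => //; apply: HZ.
have lin_diff : forall i j (v w : X j), D i j v -> D i j w ->
    A i j (v - w) = A i j v - A i j w.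
  move=> i j v w Dv Dw; have := Hlin i j (-1) w v Dw Dv.
  by rewrite !scaleN1r addrC [- _ + _]addrC.
have rel : forall i j, i != j -> forall v w, D j j v -> D j j w ->
    `|A i j v - A i j w| <= c i j * `|A j j v - A j j w| + d i j * `|v - w|.
  move=> i j ij v w Dv Dw; have [_ _ H] := Hbnd i j ij.
  rewrite -(lin_diff i j v w (Hdom i j ij v Dv) (Hdom i j ij w Dw)) -(lin_diff j j v w Dv Dw); apply: H; exact: sub_diff.
have col_lt : forall j : 'I_k, \sum_(i | i != j) c (s i) (s j) < 1.
  move=> j; apply: (le_lt_trans _ (Hsum (s j))).
  have -> : \sum_(i | i != j) c (s i) (s j) =
      \sum_(i' in s @: [set i | i != j]%SET) c i' (s j).
    rewrite big_imset /=; last by move=> x y _ _; exact: s_inj.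
    by apply: eq_bigl => i; rewrite inE.
  rewrite [X in _ <= X](bigID (fun i' => i' \in s @: [set i | i != j]%SET)) /=.
  rewrite -[X in X <= _]addr0 lerD //.
    rewrite le_eqVlt; apply/orP; left; apply/eqP; apply: eq_bigl => i'.
    case Hi: (i' \in s @: [set i | i != j]%SET); rewrite ?andbF ?andbT //.
    move/imsetP: Hi => -[x]; rewrite inE => xj ->; by rewrite inj_eq.
  apply: sumr_ge0 => i' /andP[H _]; by have [] := Hbnd i' (s j) H.
have est : forall (v w : forall i : 'I_k, X (s i)), block_dom D v -> block_dom D w ->
  forall j : 'I_k,
  `|A (s j) (s j) (v j) - A (s j) (s j) (w j)| <=
  (1 - \sum_(i | i != j) c (s i) (s j))^-1 *
  \sum_i (`|block_apply A v i - block_apply A w i|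
           + \sum_(l | l != i) d (s i) (s l) * `|v l - w l|).
  move=> v w Dv Dw.
  apply: (@key _ k (fun j => `|A (s j) (s j) (v j) - A (s j) (s j) (w j)|) _
              (fun i j => c (s i) (s j))) => //.
  move=> i /=.
  have E : block_apply A v i - block_apply A w i =
     (A (s i) (s i) (v i) - A (s i) (s i) (w i)) +
     \sum_(j | j != i) (A (s i) (s j) (v j) - A (s i) (s j) (w j)).
    by rewrite /block_apply -sumrB (bigD1 i).
  have -> : A (s i) (s i) (v i) - A (s i) (s i) (w i) =
     (block_apply A v i - block_apply A w i) -
     \sum_(j | j != i) (A (s i) (s j) (v j) - A (s i) (s j) (w j)).
    by rewrite E addrK.
  apply: le_trans (ler_normB _ _) _.
  rewrite -addrA lerD2l -big_split.
  apply: le_trans (ler_norm_sum _ _ _) _; apply: ler_sum => j ji.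
  rewrite [X in _ <= X]addrC; apply: rel => //; by rewrite (inj_eq s_inj) eq_sym.
move=> u x y Du ux uy.
have cvT : forall j, cvg ((fun m => A (s j) (s j) (u m j)) @ \oo).
  move=> j; apply/cauchy_cvgP; apply: cauchy_of_diff.
  apply: (@dom0 _ _ _ _ (fun p => (1 - \sum_(i | i != j) c (s i) (s j))^-1 *
    \sum_i (`|block_apply A (u p.1) i - block_apply A (u p.2) i|
           + \sum_(l | l != i) d (s i) (s l) * `|u p.1 l - u p.2 l|))).
    by move=> p; rewrite normr_ge0 /=; apply: est.
  apply: cvg_scal0; apply: cvg_sum0 => i _; apply: cvgD0.
    exact: (@diff_of_cvg _ _ (fun m => block_apply A (u m) i) (cvgP _ (uy i))).
  apply: cvg_sum0 => l _; apply: cvg_scal0.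
  exact: (@diff_of_cvg _ _ (fun m => u m l) (cvgP _ (ux l))).
have zx : forall j, D (s j) (s j) (x j) /\ A (s j) (s j) (x j) = lim ((fun m => A (s j) (s j) (u m j)) @ \oo).
  move=> j; apply: (Hcl (s j) (fun m => u m j)); [by move=> m; exact: Du | exact: ux | exact: cvT].
split; first by move=> j; case: (zx j).
move=> i.
have conv : (fun m => block_apply A (u m) i) @ \oo --> block_apply A x i.
  rewrite /block_apply; apply: cvg_sumr => j _.
  have [->|ji] := eqVneq j i.
    rewrite (proj2 (zx i)); exact: cvT.
  apply: cvg_of_normdiff.
  apply: (@dom0 _ _ _ _ (fun m => c (s i) (s j) *
      `|A (s j) (s j) (u m j) - A (s j) (s j) (x j)| + d (s i) (s j) * `|u m j - x j|)).
    move=> m; rewrite normr_ge0 /=; apply: rel.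
    - by rewrite (inj_eq s_inj) eq_sym.
    - exact: Du.
    - exact: (proj1 (zx j)).
  apply: cvgD0; apply: cvg_scal0; apply: normdiff_of_cvg.
    rewrite (proj2 (zx j)); exact: cvT.
  exact: ux.
exact: (@cvg_unique _ (@norm_hausdorff _ (X (s i))) _ _ _ _ conv (uy i)).
Qed.
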